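(* Let $h:\{x_1,\dots,x_n\}^*\to\{a_1,\dots,a_k\}^*$ be a solution of rank $n-1$ of both equations $E$ and $E'$, and let $\lambda\in\mathbb Z^n$ have coprime coefficients with $\Gamma_h=\{\mathbf u\in\mathbb Q^n:\lambda\cdot\mathbf u=0\}$. Then for all $j,k\in\{1,\dots,n\}$ the polynomial $t_{jk}^{E,E'}$ is divisible by $\mathbf X^{\lambda^+}-\mathbf X^{\lambda^-}$. In particular, $\mathcal S_E(\beta)$ and $\mathcal S_{E'}(\beta)$ are linearly dependent over $\mathbb Q(x)$ for every $\beta\in\Gamma_h\cap\mathbb N_0^n$.
   Context: An equation is a pair $E=(u,v)$ of words over $\Xi=\{x_1,\dots,x_n\}$; a solution is a morphism $h$ with $h(u)=h(v)$. For $h:\Xi^*\to\{a_1,\dots,a_k\}^*$, $\gamma(h)_i=(|h(x_1)|_{a_i},\dots,|h(x_n)|_{a_i})$, $\Gamma_h$ is the $\mathbb Q$-span of the $\gamma(h)_i$, and the rank of $h$ is $\dim\Gamma_h$. For $E=(x_{i_1}\cdots x_{i_r},\,x_{j_1}\cdots x_{j_s})$ define $S_{E,x_j}=\sum_{a:\,i_a=j}\prod_{t=1}^{a-1}X_{i_t}-\sum_{a:\,j_a=j}\prod_{t=1}^{a-1}X_{j_t}\in\mathbb Z[X_1,\dots,X_n]$ (empty product $=1$), and $t_{jk}^{E,E'}=S_{E,x_j}S_{E',x_k}-S_{E',x_j}S_{E,x_k}$. For $\beta\in\mathbb N_0^n$, $p(\beta)\in\mathbb Z[x]$ is the image of $p$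 under $X_i\mapsto x^{(\beta)_i}$, and $\mathcal S_E(\beta)=(S_{E,x_1}(\beta),\dots,S_{E,x_n}(\beta))\in\mathbb Z[x]^n$. For $\alpha\in\mathbb N_0^n$, $\mathbf X^\alpha=\prod X_i^{(\alpha)_i}$; for $\lambda\in\mathbb Z^n$, $\lambda^\pm\in\mathbb N_0^n$ are the unique vectors with $\lambda=\lambda^+-\lambda^-$, $\lambda^+\cdot\lambda^-=0$; coprime coefficients means gcd of coordinates is $1$. *)

(* Defs.v *)
From HB Require Import structures.
From mathcomp Require Import all_boot all_order all_algebra.
Set Implicit Arguments. Unset Strict Implicit. Unset Printing Implicit Defensive.
Import Order.TTheory GRing.Theory Num.Theory.
Local Open Scope ring_scope.

(* Z[X_1,...,X_m] realised as the iterated polynomial ring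
   mpoly 0 = Z, mpoly (m+1) = (mpoly m)[Y]; the outer variable of
   mpoly (m+1) is X_1 (index 0), the variables of mpoly m are X_2..X_{m+1}. *)
Fixpoint mpoly (m : nat) : comNzRingType :=
  match m with
  | 0 => int
  | m'.+1 => {poly (mpoly m')}
  end.

(* The variable with (0-based) index i in mpoly m (0 if i >= m, never used). *)
Fixpoint mvar (m i : nat) : mpoly m :=
  match m return mpoly m with
  | 0 => 0
  | m'.+1 => match i with
             | 0 => ('X : {poly mpoly m'})
             | i'.+1 => ((mvar m' i')%:P : {poly mpoly m'})
             end
  end.

Definition X (n : nat) (i : 'I_n) : mpoly n := mvar n i.

Definition Xmon (n : nat) (alpha : 'I_n -> nat) : mpoly n :=
  \prod_(i < n) X i ^+ alpha i.

(* words over Xi = {x_1..x_n} are seq 'I_n; a morphism h into {a_1..a_k}^*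
   is given by the images of the letters. *)
Definition happ (n k : nat) (h : 'I_n -> seq 'I_k) (w : seq 'I_n) : seq 'I_k :=
  flatten (map h w).

Definition is_solution (n k : nat) (h : 'I_n -> seq 'I_k)
  (E : seq 'I_n * seq 'I_n) : Prop := happ h E.1 = happ h E.2.

(* the matrix whose rows are gamma(h)_1..gamma(h)_k; Gamma_h is its row space *)
Definition gammaM (n k : nat) (h : 'I_n -> seq 'I_k) : 'M[rat]_(k, n) :=
  \matrix_(i < k, j < n) (count_mem i (h j))%:R.

Definition rank_of (n k : nat) (h : 'I_n -> seq 'I_k) : nat := \rank (gammaM h).

Definition Sw (n : nat) (w : seq 'I_n) (j : 'I_n) : mpoly n :=
  \sum_(a < size w | nth j w a == j) \prod_(t < a) X (nth j w t).

Definition S_E (n : nat) (E : seq 'I_n * seq 'I_n) (j : 'I_n) : mpoly n :=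
  Sw E.1 j - Sw E.2 j.

Definition t_EE (n : nat) (E E' : seq 'I_n * seq 'I_n) (j l : 'I_n) : mpoly n :=
  S_E E j * S_E E' l - S_E E' j * S_E E l.

Definition mdvd (n : nat) (p q : mpoly n) : Prop := exists r : mpoly n, q = r * p.

Definition lam_plus (n : nat) (lam : 'I_n -> int) (i : 'I_n) : nat :=
  `|Num.max (lam i) 0|%N.
Definition lam_minus (n : nat) (lam : 'I_n -> int) (i : 'I_n) : nat :=
  `|Num.max (- lam i) 0|%N.

(* p(beta): image of p under X_i |-> x^(beta_i) (beta indexed from 0) *)
Fixpoint meval (m : nat) : (nat -> nat) -> mpoly m -> {poly int} :=
  match m return (nat -> nat) -> mpoly m -> {poly int} with
  | 0 => fun b p => (p : int)%:P
  | m'.+1 => fun b (p : {poly mpoly m'}) =>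
      \sum_(i < size p) meval (fun t => b t.+1) p`_i * 'X^(b 0%N * i)
  end.

Definition evalb (n : nat) (beta : 'I_n -> nat) (p : mpoly n) : {poly int} :=
  meval (fun t => if insub t is Some i then beta i else 0%N) p.

Definition Qx := {fraction {poly rat}}.
Definition toQx (p : {poly int}) : Qx := tofrac (map_poly (fun z : int => z%:~R : rat) p).

(* Main.v *)
Require Import Defs.
From HB Require Import structures.
From mathcomp Require Import all_boot all_order all_algebra.
Import Order.TTheory GRing.Theory Num.Theory.
Local Open Scope ring_scope.
From mathcomp Require Import zify ring.
Module PA.

Local Open Scope ring_scope.

Fixpoint ev (R : comNzRingType) (m : nat) (f : nat -> R) : {rmorphism mpoly m -> R} :=
  match m return {rmorphism mpoly m -> R} with
  | 0 => (intr : {rmorphism int -> R})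
  | m'.+1 => ((horner_eval (f 0%N)) \o (map_poly (ev R m' (fun t => f t.+1))))%FUN : {rmorphism {poly mpoly m'} -> R}
  end.

Lemma evS (R : comNzRingType) m f (p : mpoly m.+1) :
  ev R m.+1 f p = (map_poly (ev R m (fun t => f t.+1)) p).[f 0%N].
Proof. by []. Qed.

Lemma ev_mvar (R : comNzRingType) m f i : (i < m)%N -> ev R m f (mvar m i) = f i.
Proof.
elim: m f i => [//|m IH] f [|i] Hi; rewrite evS /=.
  by rewrite map_polyX hornerX.
by rewrite map_polyC hornerC; apply: (IH (fun t => f t.+1)).
Qed.

Lemma mpoly_ext (R : comNzRingType) m (g1 g2 : {rmorphism mpoly m -> R}) :
  (forall i, (i < m)%N -> g1 (mvar m i) = g2 (mvar m i)) -> g1 =1 g2.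
Proof.
elim: m g1 g2 => [|m IH] g1 g2 H p.
  by rewrite -[p]intz !rmorph_int.
have H' : (g1 \o polyC)%FUN =1 (g2 \o polyC)%FUN.
  apply: (IH (g1 \o polyC)%FUN (g2 \o polyC)%FUN) => i Hi /=.
  exact: (H i.+1).
rewrite -[p]coefK poly_def !rmorph_sum; apply: eq_bigr => i _.
rewrite -mul_polyC !rmorphM !rmorphXn.
have := H' p`_i => /= ->.
by have := H 0%N erefl => /= ->.
Qed.

Lemma meval_ev m (b : nat -> nat) (p : mpoly m) :
  meval b p = ev _ m (fun t => 'X^(b t) : {poly int}) p.
Proof.
elim: m b p => [|m IH] b p.
  by rewrite /= -[in LHS](intz p) polyCMz polyC1.
have Hs : (size (map_poly (ev _ m (fun t => 'X^(b t.+1) : {poly int})) p) <= size p)%N.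
  by rewrite map_polyE; apply: leq_trans (size_Poly _) _; rewrite size_map.
rewrite evS (horner_coef_wide _ Hs) [meval _ _]/=.
apply: eq_bigr => i _; rewrite coef_map /= IH exprM.
by [].
Qed.

End PA.
Import PA.

Module PB.
From mathcomp Require Import mpoly.
Local Open Scope ring_scope.

Section Fox.
Variables (n k : nat) (h : 'I_n -> seq 'I_k).

Definition par (s : seq 'I_k) : 'X_{1..k} := [multinom count_mem c s | c < k].

Fixpoint Fa (a : 'I_k) (s : seq 'I_k) : {mpoly int[k]} :=
  match s with
  | [::] => 0
  | c :: s' => (c == a)%:R + 'X_[par [:: c]] * Fa a s'
  end.

Lemma par_cons c s : par (c :: s) = (par [:: c] + par s)%MM.
Proof. by apply/mnmP => i; rewrite mnmDE !mnmE /= addn0. Qed.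

Lemma par_cat s1 s2 : par (s1 ++ s2) = (par s1 + par s2)%MM.
Proof. by apply/mnmP => i; rewrite mnmDE !mnmE count_cat. Qed.

Lemma par_nil : par [::] = 0%MM.
Proof. by apply/mnmP => i; rewrite !mnmE. Qed.

Lemma Fa_cat a s1 s2 : Fa a (s1 ++ s2) = Fa a s1 + 'X_[par s1] * Fa a s2.
Proof.
elim: s1 => [|c s1 IH] /=; first by rewrite par_nil mpolyX0 add0r mul1r.
by rewrite IH mulrDr addrA mulrA -mpolyXD -par_cons.
Qed.

Definition yf (t : nat) : {mpoly int[k]} :=
  if insub t is Some j then 'X_[par (h j)] else 0.

Definition Phi := ev _ n yf.

Lemma Phi_X (j : 'I_n) : Phi (X j) = 'X_[par (h j)].
Proof. by rewrite /Phi /X ev_mvar // /yf valK. Qed.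

Lemma Sw_cons (x : 'I_n) w j :
  Sw (x :: w) j = (x == j)%:R + X x * Sw w j.
Proof.
rewrite /Sw /= big_mkcond /= big_ord_recl /= big_ord0.
rewrite [in RHS]big_mkcond mulr_sumr; congr (_ + _).
  by case: (x == j).
apply: eq_bigr => i _ /=.
rewrite add0n.
case: ifP => _; last by rewrite mulr0.
rewrite /bump /= add1n big_ord_recl /=.
congr (_ * _).
Qed.

Lemma fox a w : Fa a (happ h w) = \sum_(j < n) Phi (Sw w j) * Fa a (h j).
Proof.
elim: w => [|x w IH].
  by rewrite /happ /= big1 // => j _; rewrite /Sw big_ord0 rmorph0 mul0r.
rewrite [happ h _]/happ /= -/(happ h w) Fa_cat IH.
under eq_bigr => j _ do rewrite Sw_cons rmorphD rmorphM Phi_X rmorph_nat mulrDl.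
rewrite big_split /=; congr (_ + _).
  rewrite (bigD1 x) //= eqxx mul1r big1 ?addr0 // => j /negPf.
  by rewrite eq_sym => ->; rewrite mul0r.
by rewrite mulr_sumr; apply: eq_bigr => j _; rewrite mulrA.
Qed.

Lemma fox_sol E a : is_solution h E ->
  \sum_(j < n) Phi (S_E E j) * Fa a (h j) = 0.
Proof.
move=> HE; rewrite /S_E.
under eq_bigr => j _ do rewrite rmorphB mulrBl.
by rewrite sumrB -!fox HE subrr.
Qed.

Definition e1 (p : {mpoly int[k]}) : rat := mmap (intr : {rmorphism int -> rat}) (fun _ => 1) p.

Lemma e1M p q : e1 (p * q) = e1 p * e1 q.
Proof. exact: (mmap_is_multiplicative _ _).1. Qed.
Lemma e1D p q : e1 (p + q) = e1 p + e1 q.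
Proof. exact: mmapD. Qed.
Lemma e1X m : e1 'X_[m] = 1.
Proof. by rewrite /e1 mmapX /mmap1 big1 // => i _; rewrite expr1n. Qed.
Lemma e1n (b : nat) : e1 b%:R = b%:R.
Proof. by rewrite /e1 -mpolyC_nat mmapC /= rmorph_nat. Qed.

Lemma e1_Fa a s : e1 (Fa a s) = (count_mem a s)%:R.
Proof.
elim: s => [|c s IH] /=; first by rewrite /e1 mmap0.
by rewrite e1D e1M e1n e1X IH mul1r natrD.
Qed.

End Fox.

End PB.
Import PB.

Module PC.

Local Open Scope ring_scope.

Lemma missing r (g : 'I_r -> 'I_r.+1) : injective g ->
  exists c, c \notin codom g /\ forall j, j != c -> exists i, j = g i.
Proof.
move=> ginj.
have cg : #|codom g| = r by rewrite card_codom // card_ord.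
have [c Hc] : exists c, c \notin codom g.
  apply/existsP; rewrite -negb_forall; apply/negP => /forallP Hall.
  have : (#|'I_r.+1| <= #|codom g|)%N.
    by apply: subset_leq_card; apply/subsetP => x _; exact: Hall.
  by rewrite card_ord cg ltnn.
exists c; split => // j Hj.
have Hsub : codom g \subset predC1 c.
  by apply/subsetP => x Hx /=; apply: contraNneq Hc => <-.
have Hcard : #|codom g| = #|predC1 c| by rewrite cardC1 card_ord cg.
have /subset_cardP := Hcard => /(_ Hsub) Heq.
have : j \in codom g by rewrite Heq inE.
by move/codomP => [i ->]; exists i.
Qed.

Lemma split_sum (R : nmodType) r (g : 'I_r -> 'I_r.+1) c (F : 'I_r.+1 -> R) :
  injective g -> c \notin codom g -> (forall j, j != c -> exists i, j = g i) ->
  \sum_(j < r.+1) F j = F c + \sum_(i < r) F (g i).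
Proof.
move=> ginj Hc Hall; rewrite (bigD1 c) //=; congr (_ + _).
have -> : \sum_(i < r) F (g i) = \sum_(j <- image g predT) F j.
  by rewrite big_image.
rewrite -big_filter.
apply: perm_big; apply: uniq_perm.
- by rewrite filter_uniq // index_enum_uniq.
- by rewrite /image_mem map_inj_uniq // enum_uniq.
move=> x; rewrite mem_filter mem_index_enum andbT.
apply/idP/idP.
  move=> /Hall [i ->]; exact: image_f.
move=> /imageP [i _ ->]; apply: contraNneq Hc => <-.
exact: codom_f.
Qed.

Lemma key_eq (R : comNzRingType) kk r (P : 'M[R]_(kk, r.+1)) (f : 'I_r -> 'I_kk)
  (g : 'I_r -> 'I_r.+1) c :
  injective g -> c \notin codom g -> (forall j, j != c -> exists i, j = g i) ->
  forall s : 'I_r.+1 -> R, (forall a, \sum_j P a j * s j = 0) ->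
  forall i, \det (mxsub f g P) * s (g i) =
            s c * (- (\adj (mxsub f g P) *m \col_i0 P (f i0) c)) i 0.
Proof.
move=> ginj Hc Hall s Hs i.
set Q := mxsub f g P.
have HQ : Q *m (\col_i0 s (g i0)) = - (s c *: \col_i0 P (f i0) c).
  apply/matrixP => i1 j1; rewrite !mxE.
  have := Hs (f i1); rewrite (@split_sum _ _ _ _ _ ginj Hc Hall) => /eqP.
  rewrite addrC addr_eq0 => /eqP H0.
  rewrite mulrC -H0; apply: eq_bigr => i2 _; by rewrite !mxE.
have H : (\det Q) *: (\col_i0 s (g i0)) = \adj Q *m (Q *m \col_i0 s (g i0)).
  by rewrite mulmxA mul_adj_mx mul_scalar_mx.
rewrite HQ mulmxN -scalemxAr in H.
have /matrixP /(_ i 0) := H; rewrite !mxE => ->.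
by rewrite mulrN.
Qed.

Lemma dep2 (R : idomainType) kk r (P : 'M[R]_(kk, r.+1)) (f : 'I_r -> 'I_kk)
  (g : 'I_r -> 'I_r.+1) :
  injective g -> \det (mxsub f g P) != 0 ->
  forall s s' : 'I_r.+1 -> R,
  (forall a, \sum_j P a j * s j = 0) -> (forall a, \sum_j P a j * s' j = 0) ->
  forall j l, s j * s' l = s' j * s l.
Proof.
move=> ginj HD s s' Hs Hs' j l.
have [c [Hc Hall]] := @missing _ _ ginj.
set D := \det (mxsub f g P).
have Hom : forall j, exists om, forall t : 'I_r.+1 -> R,
    (forall a, \sum_j P a j * t j = 0) -> D * t j = t c * om.
  move=> j0; have [->|/Hall [i ->]] := eqVneq j0 c.
    by exists D => t _; rewrite mulrC.
  by exists ((- (\adj (mxsub f g P) *m \col_i0 P (f i0) c)) i 0) => t Ht;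
     exact: (@key_eq _ _ _ P f g c ginj Hc Hall t Ht i).
have [oj Hj] := Hom j; have [ol Hl] := Hom l.
apply/eqP; rewrite -subr_eq0.
have : D * D * (s j * s' l - s' j * s l) = 0.
  rewrite mulrBr.
  have -> : D * D * (s j * s' l) = (D * s j) * (D * s' l) by ring.
  have -> : D * D * (s' j * s l) = (D * s' j) * (D * s l) by ring.
  by rewrite (Hj s Hs) (Hl s' Hs') (Hj s' Hs') (Hl s Hs); apply/eqP; rewrite subr_eq0; apply/eqP; ring.
by move/eqP; rewrite !mulf_eq0 (negbTE HD) /=.
Qed.

Lemma minor_exists' kk nn (M : 'M[rat]_(kk, nn)) :
  exists f : 'I_(\rank M) -> 'I_kk, exists g : 'I_(\rank M) -> 'I_nn,
    injective g /\ \det (mxsub f g M) != 0.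
Proof.
pose f0 := maxrankfun M.
have Bfree : row_free (rowsub f0 M) := maxrowsub_free M.
have BTfull : row_full (rowsub f0 M)^T.
  by rewrite /row_full mxrank_tr; exact: Bfree.
pose g0 := fullrankfun BTfull.
have U := fullrowsub_unit BTfull.
exists f0, g0; split; first exact: fullrankfun_inj.
have E : rowsub g0 (rowsub f0 M)^T = (mxsub f0 g0 M)^T.
  by apply/matrixP => i j; rewrite !mxE.
by move: U; rewrite E unitmxE det_tr unitfE.
Qed.

Lemma minor_exists kk r (M : 'M[rat]_(kk, r.+1)) : \rank M = r ->
  exists f : 'I_r -> 'I_kk, exists g : 'I_r -> 'I_r.+1,
    injective g /\ \det (mxsub f g M) != 0.
Proof.
move=> HrM; move: (@minor_exists' _ _ M); rewrite HrM. done.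
Qed.

End PC.
Import PC.

Module PD.
From mathcomp Require Import mpoly.
Local Open Scope ring_scope.

Lemma coef_sumZX nn (I : Type) (s : seq I) (c : I -> int) (g : I -> 'X_{1..nn}) u :
  (\sum_(i <- s) c i *: 'X_[g i] : {mpoly int[nn]})@_u = \sum_(i <- s) c i * (g i == u)%:R.
Proof.
elim: s => [|x s IH]; first by rewrite !big_nil mcoeff0.
by rewrite !big_cons mcoeffD mcoeffZ mcoeffX IH.
Qed.

Section Kernel.
Variables (n k : nat) (M : 'I_n -> 'X_{1..k}) (lp lm : 'X_{1..n}).

Definition Mu (u : 'X_{1..n}) : 'X_{1..k} :=
  [multinom (\sum_(i < n) M i c * u i)%N | c < k].

Definition evM (p : {mpoly int[n]}) : {mpoly int[k]} :=
  mmap (intr : {rmorphism int -> {mpoly int[k]}}) (fun i => 'X_[M i]) p.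

Lemma evMM p q : evM (p * q) = evM p * evM q.
Proof. exact: (mmap_is_multiplicative _ _).1. Qed.
Lemma evMB p q : evM (p - q) = evM p - evM q.
Proof. exact: mmapB. Qed.

Lemma intr_mpolyC (c : int) : (c%:~R : {mpoly int[k]}) = c%:MP.
Proof. by rewrite -[in RHS](intz c) rmorph_int. Qed.

Lemma evMZ c p : evM (c *: p) = c *: evM p.
Proof. by rewrite /evM mmapZ /= intr_mpolyC mul_mpolyC. Qed.

Lemma evM_sum (I : Type) (s : seq I) (F : I -> {mpoly int[n]}) :
  evM (\sum_(i <- s) F i) = \sum_(i <- s) evM (F i).
Proof.
by rewrite /evM raddf_sum.
Qed.

Lemma evM_X u : evM 'X_[u] = 'X_[Mu u].
Proof.
rewrite /evM mmapX /mmap1.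
under eq_bigr => i _ do rewrite mpolyXn.
rewrite -(big_morph (fun m => 'X_[m] : {mpoly int[k]}) (@mpolyXD _ _) (mpolyX0 _ _)).
congr 'X_[_]; apply/mnmP => c; rewrite mnm_sumE mnmE.
by apply: eq_bigr => i _; rewrite mulmnE.
Qed.

Hypothesis Hdisj : forall i, (lp i * lm i = 0)%N.
Hypothesis Hpos : exists i, (0 < lp i)%N.
Hypothesis HMl : Mu lp = Mu lm.
Hypothesis Hker : forall u v, Mu u = Mu v ->
  exists z : int, forall i, (u i)%:Z = (v i)%:Z + z * ((lp i)%:Z - (lm i)%:Z).

Definition step (m : 'X_{1..n}) := (m - lp + lm)%MM.
Definition wt (m : 'X_{1..n}) := (\sum_(i < n) m i * lp i)%N.

Lemma wt_step m : (lp <= m)%MM -> (wt (step m) < wt m)%N.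
Proof.
move=> /mnm_lepP Hle.
have E : wt m = (wt (step m) + \sum_(i < n) lp i * lp i)%N.
  rewrite /wt -big_split /=; apply: eq_bigr => i _.
  rewrite /step !mnmE mulnDl (mulnC (lm i)) Hdisj addn0 mulnBl subnK //.
  by rewrite leq_mul2r Hle orbT.
rewrite E -[X in (X < _)%N]addn0 ltn_add2l.
have [i0 Hi0] := Hpos.
rewrite (bigD1 i0) //= ltn_addr // muln_gt0 Hi0.
done.
Qed.

Fixpoint red (f : nat) (m : 'X_{1..n}) : 'X_{1..n} :=
  match f with
  | 0 => m
  | f'.+1 => if (lp <= m)%MM then red f' (step m) else m
  end.

Definition rho m := red (wt m).+1 m.

Lemma red_min f m : (wt m < f)%N -> ~~ (lp <= red f m)%MM.
Proof.
elim: f m => [//|f IH] m Hf /=.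
case: ifP => Hle; last by rewrite Hle.
apply: IH; have := wt_step m Hle; lia.
Qed.

Lemma rho_min m : ~~ (lp <= rho m)%MM.
Proof. exact: red_min. Qed.

Definition BB : {mpoly int[n]} := 'X_[lp] - 'X_[lm].

Lemma red_div f m : exists q, 'X_[m] - 'X_[red f m] = q * BB.
Proof.
elim: f m => [|f IH] m /=; first by exists 0; rewrite subrr mul0r.
case: ifP => Hle; last by exists 0; rewrite subrr mul0r.
have [q Hq] := IH (step m).
exists ('X_[m - lp] + q).
rewrite mulrDl -Hq /BB mulrBr -!mpolyXD submK //.
rewrite /step; ring.
Qed.

Lemma evBB : evM BB = 0.
Proof. by rewrite /BB evMB !evM_X HMl subrr. Qed.

Lemma uniq_min u v : ~~ (lp <= u)%MM -> ~~ (lp <= v)%MM -> Mu u = Mu v -> u = v.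
Proof.
move=> Hu Hv /Hker [z Hz].
have [z0|zne] := eqVneq z 0.
  by apply/mnmP => i; have := Hz i; rewrite z0 mul0r addr0 => /eqP; rewrite eqz_nat => /eqP.
exfalso.
have [zneg|zpos|z0] := ltgtP z 0; last by move: zne; rewrite z0 eqxx.
- move/negP: Hv; apply; apply/mnm_lepP => i.
  have := Hz i; have := Hdisj i.
  case: (lp i) => [//|l] /eqP; rewrite muln_eq0 /= => /eqP ->.
  move=> H; nia.
- move/negP: Hu; apply; apply/mnm_lepP => i.
  have := Hz i; have := Hdisj i.
  case: (lp i) => [//|l] /eqP; rewrite muln_eq0 /= => /eqP ->.
  move=> H; nia.
Qed.

Lemma kernel_div p : evM p = 0 -> exists q, p = q * BB.
Proof.
move=> Hp.
pose r := \sum_(m <- msupp p) p@_m *: 'X_[rho m].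
have [q Hq] : exists q, p - r = q * BB.
  rewrite {1}(mpolyE p) /r -sumrB.
  elim: (msupp p) => [|m s [q IH]]; first by exists 0; rewrite big_nil mul0r.
  have [q1 Hq1] := red_div (wt m).+1 m.
  exists (p@_m *: q1 + q).
  by rewrite big_cons IH -scalerBr -/(rho m) Hq1 mulrDl scalerAl.
have Hr : r = p - q * BB by rewrite -Hq opprB addrC subrK.
have Hr0 : evM r = 0 by rewrite Hr evMB evMM evBB mulr0 Hp subr0.
suff r0 : r = 0 by exists q; rewrite -Hq r0 subr0.
apply/mpolyP => u; rewrite mcoeff0.
have Er : r@_u = \sum_(m <- msupp p) p@_m * (rho m == u)%:R.
  by rewrite /r coef_sumZX.
rewrite Er.
have [Hu|Hu] := boolP (lp <= u)%MM.
  rewrite big1 // => m _.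
  have : rho m != u by apply: contraNneq (rho_min m) => ->.
  by move/negbTE ->; rewrite mulr0.
have : (evM r)@_(Mu u) = 0 by rewrite Hr0 mcoeff0.
rewrite /r evM_sum.
under eq_bigr => m _ do rewrite evMZ evM_X.
rewrite coef_sumZX => H; apply: (etrans _ H).
apply: eq_bigr => m _.
congr (_ * _%:R).
case: eqP => [->|Hne]; first by rewrite eqxx.
case: eqP => // H2; exfalso; apply: Hne.
exact: uniq_min (rho_min m) Hu H2.
Qed.

End Kernel.

End PD.
Import PD.

Module PE.

Local Open Scope ring_scope.

Lemma lam_pm n (lam : 'I_n -> int) i :
  (lam_plus lam i)%:Z - (lam_minus lam i)%:Z = lam i.
Proof. rewrite /lam_plus /lam_minus; case: (lam i) => m; lia. Qed.

Lemma lam_pm0 n (lam : 'I_n -> int) i :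
  (lam_plus lam i * lam_minus lam i = 0)%N.
Proof. rewrite /lam_plus /lam_minus; case: (lam i) => m; lia. Qed.

Lemma bezout_big n (lam : 'I_n -> int) :
  exists a : 'I_n -> int,
    \sum_(i < n) a i * lam i = (\big[gcdn/0%N]_(i < n) `|lam i|%N)%:Z.
Proof.
elim: n lam => [|n IH] lam.
  by exists (fun _ => 0); rewrite !big_ord0.
have [a' Ha'] := IH (fun i => lam (widen_ord (leqnSn n) i)).
set g := (\big[gcdn/0%N]_(i < n) `|lam (widen_ord (leqnSn n) i)|%N) in Ha'.
have [u [v Huv]] := Bezoutz (g%:Z) (lam ord_max).
exists (fun i : 'I_n.+1 => if @insub nat (fun x => x < n)%N 'I_n (val i) is Some j then u * a' j else v).
rewrite big_ord_recr [in RHS]big_ord_recr /= -/g.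
rewrite insubF; last by rewrite /= ltnn.
transitivity (u * g%:Z + v * lam ord_max); last by rewrite Huv /gcdz absz_nat.
congr (_ + _).
rewrite -Ha' mulr_sumr; apply: eq_bigr => i _.
by rewrite /= valK mulrA.
Qed.

Lemma sum_delta (R : nzSemiRingType) n (F : 'I_n -> R) j :
  \sum_(t < n) F t * (t == j)%:R = F j.
Proof.
rewrite (bigD1 j) //= eqxx mulr1 big1 ?addr0 // => t /negbTE ->.
by rewrite mulr0.
Qed.

Lemma ker_int n k (h : 'I_n -> seq 'I_k) (lam : 'I_n -> int) :
  (\big[gcdn/0%N]_(i < n) `|lam i|%N = 1%N) ->
  (forall u : 'rV[rat]_n, (u <= gammaM h)%MS <-> \sum_(i < n) (lam i)%:~R * u ord0 i = 0) ->
  forall d : 'I_n -> int, (forall c : 'I_k, \sum_(i < n) (count_mem c (h i))%:Z * d i = 0) ->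
  exists z : int, forall i, d i = z * lam i.
Proof.
move=> Hg Hgam d Hd.
have Hperp : forall x : 'rV[rat]_n, (x <= gammaM h)%MS ->
    \sum_(i < n) x ord0 i * (d i)%:~R = 0.
  move=> x /submxP [y ->].
  under eq_bigr => i _ do rewrite mxE mulr_suml.
  rewrite exchange_big /= big1 // => c _.
  under eq_bigr => i _ do rewrite /gammaM mxE -mulrA.
  rewrite -mulr_sumr.
  have -> : \sum_(i < n) (count_mem c (h i))%:R * (d i)%:~R = ((\sum_(i < n) (count_mem c (h i))%:Z * d i)%:~R : rat).
    by rewrite rmorph_sum; apply: eq_bigr => i _; rewrite rmorphM /=.
  by rewrite Hd mulr0.
have Hij : forall i j, lam i * d j = lam j * d i.
  move=> i j.
  pose x : 'rV[rat]_n := \row_t ((lam i)%:~R * (t == j)%:R - (lam j)%:~R * (t == i)%:R).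
  have Hx : (x <= gammaM h)%MS.
    apply/Hgam.
    under eq_bigr => t _ do rewrite mxE mulrBr !mulrA.
    by rewrite sumrB !sum_delta mulrC subrr.
  have := Hperp x Hx.
  under eq_bigr => t _ do rewrite mxE mulrBl mulrAC [X in _ - X]mulrAC.
  rewrite sumrB !sum_delta => /eqP; rewrite subr_eq0 -!intrM eqr_int => /eqP.
  by rewrite mulrC => ->; rewrite mulrC.
have [a Ha] := @bezout_big n lam.
rewrite Hg in Ha.
have Ha1 : \sum_(i < n) a i * lam i = 1 by rewrite Ha.
exists (\sum_(i < n) a i * d i) => j.
rewrite -[d j]mul1r -Ha1 mulr_suml mulr_suml; apply: eq_bigr => i _.
by rewrite -mulrA Hij; ring.
Qed.

Lemma rows_perp n k (h : 'I_n -> seq 'I_k) (lam : 'I_n -> int) :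
  (forall u : 'rV[rat]_n, (u <= gammaM h)%MS <-> \sum_(i < n) (lam i)%:~R * u ord0 i = 0) ->
  forall c : 'I_k, \sum_(i < n) (count_mem c (h i))%:Z * lam i = 0.
Proof.
move=> Hgam c.
have := (Hgam (row c (gammaM h))).1 (row_sub c _).
under eq_bigr => i _ do rewrite mxE /gammaM mxE.
move=> H; apply/eqP; rewrite -(eqr_int rat) rmorph_sum /= rmorph0.
apply/eqP; apply: (etrans _ H); apply: eq_bigr => i _; rewrite rmorphM /= mulrC.
done.
Qed.

End PE.
Import PE.

Module PF.
From mathcomp Require Import mpoly.
Local Open Scope ring_scope.

Definition xf n (t : nat) : {mpoly int[n]} := if insub t is Some i then 'X_i else 0.
Definition phi n := ev _ n (xf n).

Lemma phi_X n (i : 'I_n) : phi n (X i) = 'X_i.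
Proof. by rewrite /phi /X ev_mvar // /xf valK. Qed.

Lemma psi_phi n p :
  mmap (intr : {rmorphism int -> Defs.mpoly n}) (fun i => X i) (phi n p) = p.
Proof.
have := @mpoly_ext _ n ((mmap (intr : {rmorphism int -> Defs.mpoly n}) (fun i => X i)) \o phi n)%FUN idfun.
apply => // i Hi /=.
have -> : mvar n i = X (Ordinal Hi) by [].
by rewrite phi_X mmapX mmap1U.
Qed.

Lemma Phi_evM n k (h : 'I_n -> seq 'I_k) p :
  Phi n k h p = evM n k (fun j => par k (h j)) (phi n p).
Proof.
have := @mpoly_ext _ n (Phi n k h) ((mmap (intr : {rmorphism int -> {mpoly int[k]}}) (fun j => 'X_[par k (h j)])) \o phi n)%FUN.
apply => // i Hi /=.
have -> : mvar n i = X (Ordinal Hi) by [].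
by rewrite phi_X mmapX mmap1U Phi_X.
Qed.

Lemma Posz_sum (I : Type) (s : seq I) (F : I -> nat) :
  ((\sum_(i <- s) F i)%N)%:Z = \sum_(i <- s) (F i)%:Z.
Proof. exact: (big_morph Posz PoszD erefl). Qed.

Lemma psi_X n (m : 'X_{1..n}) :
  mmap (intr : {rmorphism int -> Defs.mpoly n}) (fun i => X i) 'X_[m] = Xmon (fun i => m i).
Proof. by rewrite mmapX. Qed.

Lemma psiM n (p q : {mpoly int[n]}) :
  mmap (intr : {rmorphism int -> Defs.mpoly n}) (fun i => X i) (p * q) =
  mmap (intr : {rmorphism int -> Defs.mpoly n}) (fun i => X i) p *
  mmap (intr : {rmorphism int -> Defs.mpoly n}) (fun i => X i) q.
Proof. exact: (mmap_is_multiplicative _ _).1. Qed.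

Lemma finish r k (h : 'I_r.+1 -> seq 'I_k) (lam' : 'I_r.+1 -> int) (lp lm : 'X_{1..r.+1}) t :
  (forall i, (lp i * lm i = 0)%N) -> (exists i, (0 < lp i)%N) ->
  (forall i, (lp i)%:Z - (lm i)%:Z = lam' i) ->
  (forall c, \sum_(i < r.+1) (count_mem c (h i))%:Z * lam' i = 0) ->
  (forall d : 'I_r.+1 -> int, (forall c, \sum_(i < r.+1) (count_mem c (h i))%:Z * d i = 0) ->
      exists z : int, forall i, d i = z * lam' i) ->
  evM _ _ (fun j0 => par k (h j0)) (phi _ t) = 0 ->
  exists q, t = q * (Xmon (fun i => lp i) - Xmon (fun i => lm i)).
Proof.
move=> Hdisj Hpos Hl Hrows Hker Ht.
have HMl : Mu _ _ (fun j0 => par k (h j0)) lp = Mu _ _ (fun j0 => par k (h j0)) lm.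
  apply/mnmP => c; rewrite !mnmE; apply/eqP; rewrite -eqz_nat !Posz_sum.
  rewrite -subr_eq0 -sumrB; apply/eqP; apply: (etrans _ (Hrows c)).
  by apply: eq_bigr => i _; rewrite !mnmE !PoszM -mulrBr Hl.
have Hker' : forall u v, Mu _ _ (fun j0 => par k (h j0)) u = Mu _ _ (fun j0 => par k (h j0)) v ->
    exists z : int, forall i, (u i)%:Z = (v i)%:Z + z * ((lp i)%:Z - (lm i)%:Z).
  move=> u v /mnmP Huv.
  suff [z Hz] : exists z : int, forall i, (u i)%:Z - (v i)%:Z = z * lam' i.
    by exists z => i; rewrite Hl -Hz; ring.
  apply: (Hker (fun i => (u i)%:Z - (v i)%:Z)).
  move=> c; have := Huv c; rewrite !mnmE => /eqP; rewrite -eqz_nat !Posz_sum.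
  rewrite -subr_eq0 -sumrB => /eqP H; apply: (etrans _ H).
  by apply: eq_bigr => i _; rewrite !mnmE !PoszM mulrBr.
have [q Hq] := @kernel_div _ _ _ lp lm Hdisj Hpos HMl Hker' _ Ht.
exists (mmap (intr : {rmorphism int -> Defs.mpoly r.+1}) (fun i => X i) q).
by rewrite -(psi_phi _ t) Hq psiM /BB mmapB !psi_X.
Qed.

Lemma part1 r k (h : 'I_r.+1 -> seq 'I_k) E E' (lam : 'I_r.+1 -> int) :
  is_solution h E -> is_solution h E' -> \rank (gammaM h) = r ->
  (\big[gcdn/0%N]_(i < r.+1) `|lam i|%N = 1%N) ->
  (forall u : 'rV[rat]_r.+1, (u <= gammaM h)%MS <-> \sum_(i < r.+1) (lam i)%:~R * u ord0 i = 0) ->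
  forall j l, mdvd (Xmon (lam_plus lam) - Xmon (lam_minus lam)) (t_EE E E' j l).
Proof.
move=> HE HE' Hr Hg Hgam j l.
pose P : 'M[{mpoly int[k]}]_(k, r.+1) := \matrix_(a, j0) Fa k a (h j0).
have Hmap : map_mx (mmap (intr : {rmorphism int -> rat}) (fun _ => 1)) P = gammaM h.
  by apply/matrixP => a i; rewrite !mxE; exact: e1_Fa.
have [f [g [ginj Hdet]]] := @minor_exists _ _ (gammaM h) Hr.
have HdetP : \det (mxsub f g P) != 0.
  apply: contra Hdet => /eqP H0.
  by rewrite -Hmap -map_mxsub det_map_mx H0 rmorph0.
have Hs : forall E0 : seq 'I_r.+1 * seq 'I_r.+1, is_solution h E0 ->
    forall a, \sum_j0 P a j0 * Phi _ _ h (S_E E0 j0) = 0.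
  move=> E0 HE0 a; have := @fox_sol _ _ h E0 a HE0 => H; apply: (etrans _ H).
  by apply: eq_bigr => j0 _; rewrite mxE mulrC.
have Hdep := @dep2 _ _ _ P f g ginj HdetP _ _ (Hs E HE) (Hs E' HE') j l.
have Ht : evM _ _ (fun j0 => par k (h j0)) (phi _ (t_EE E E' j l)) = 0.
  by rewrite -Phi_evM /t_EE rmorphB !rmorphM Hdep subrr.
have Hrows := @rows_perp _ _ h lam Hgam.
have Hker := @ker_int _ _ h lam Hg Hgam.
pose mp : 'X_{1..r.+1} := [multinom lam_plus lam i | i < r.+1].
pose mm : 'X_{1..r.+1} := [multinom lam_minus lam i | i < r.+1].
have Emp : Xmon (fun i => mp i) = Xmon (lam_plus lam).
  by rewrite /Xmon; apply: eq_bigr => i _; rewrite mnmE.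
have Emm : Xmon (fun i => mm i) = Xmon (lam_minus lam).
  by rewrite /Xmon; apply: eq_bigr => i _; rewrite mnmE.
have [Hp|Hn] := boolP [exists i, 0 < lam i].
  have Hpos : exists i, (0 < mp i)%N.
    move/existsP: Hp => [i Hi]; exists i; rewrite mnmE /lam_plus; lia.
  have [q Hq] := @finish _ _ h lam mp mm _
    (fun i => ltac:(rewrite !mnmE; exact: lam_pm0)) Hpos
    (fun i => ltac:(rewrite !mnmE; exact: lam_pm)) Hrows Hker Ht.
  by exists q; rewrite Hq Emp Emm.
have Hnz : exists i, lam i != 0.
  apply/existsP; apply: contraTT isT => /existsPn Hall.
  move: Hg; rewrite big1 // => i _; have := Hall i; rewrite negbK => /eqP ->.
  by [].
have Hpos : exists i, (0 < mm i)%N.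
  move: Hnz => [i Hi]; exists i; rewrite mnmE /lam_minus.
  move/existsPn: Hn => /(_ i) Hi'; lia.
have Hrows' : forall c, \sum_(i < r.+1) (count_mem c (h i))%:Z * (- lam i) = 0.
  move=> c; rewrite (eq_bigr (fun i => - ((count_mem c (h i))%:Z * lam i))); last by move=> i _; ring.
  by rewrite sumrN Hrows oppr0.
have Hker' : forall d : 'I_r.+1 -> int, (forall c, \sum_(i < r.+1) (count_mem c (h i))%:Z * d i = 0) ->
      exists z : int, forall i, d i = z * (- lam i).
  by move=> d /Hker [z Hz]; exists (- z) => i; rewrite Hz; ring.
have [q Hq] := @finish _ _ h (fun i => - lam i) mm mp _
    (fun i => ltac:(rewrite !mnmE mulnC; exact: lam_pm0))  Hpos
    (fun i => ltac:(rewrite !mnmE -(@lam_pm _ lam i); ring)) Hrows' Hker' Ht.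
by exists (- q); rewrite Hq Emp Emm; ring.
Qed.

End PF.
Import PF.

Module PG.

Local Open Scope ring_scope.

Lemma toQxM p q : toQx (p * q) = toQx p * toQx q.
Proof. by rewrite /toQx !rmorphM. Qed.
Lemma toQxB p q : toQx (p - q) = toQx p - toQx q.
Proof. by rewrite /toQx !rmorphB. Qed.
Lemma toQx0 : toQx 0 = 0.
Proof. by rewrite /toQx !rmorph0. Qed.

Section Part2.
Variables (r : nat) (beta : 'I_r.+1 -> nat).
Let bf (t : nat) : nat := if insub t is Some i then beta i else 0%N.
Let EV := ev {poly int} r.+1 (fun t => 'X^(bf t)).

Lemma evalb_EV p : evalb beta p = EV p.
Proof. exact: meval_ev. Qed.

Lemma EV_Xmon (al : 'I_r.+1 -> nat) : EV (Xmon al) = 'X^(\sum_(i < r.+1) beta i * al i)%N.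
Proof.
rewrite /Xmon rmorph_prod.
rewrite (big_morph (fun e => 'X^e : {poly int}) (fun a b => exprD 'X a b) (expr0 'X)).
apply: eq_bigr => i _.
by rewrite rmorphXn /EV /X ev_mvar // /bf valK exprM.
Qed.

End Part2.


End PG.
Import PG.

Theorem lemma3p9 (n k : nat) (h : 'I_n -> seq 'I_k)
  (E E' : seq 'I_n * seq 'I_n) (lam : 'I_n -> int) :
  is_solution h E -> is_solution h E' ->
  (rank_of h).+1 = n ->
  (\big[gcdn/0%N]_(i < n) `|lam i|%N = 1%N) ->
  (forall u : 'rV[rat]_n,
      (u <= gammaM h)%MS <-> \sum_(i < n) (lam i)%:~R * u ord0 i = 0) ->
  (forall j l : 'I_n,
      mdvd (Xmon (lam_plus lam) - Xmon (lam_minus lam)) (t_EE E E' j l)) /\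
  (forall beta : 'I_n -> nat,
      (\row_(i < n) ((beta i)%:R : rat) <= gammaM h)%MS ->
      exists c1 c2 : Qx, (c1 != 0 \/ c2 != 0) /\
        forall j : 'I_n,
          c1 * toQx (evalb beta (S_E E j)) + c2 * toQx (evalb beta (S_E E' j)) = 0).
Proof.
case: n h E E' lam => [|r] h E E' lam HE HE' Hrank Hg Hgam; first by [].
have Hr : \rank (gammaM h) = r by case: Hrank.
have P1 := @part1 _ _ h E E' lam HE HE' Hr Hg Hgam.
split => // beta Hbeta.
have Hlb : \sum_(i < r.+1) lam i * (beta i)%:Z = 0.
  have := (Hgam _).1 Hbeta.
  under eq_bigr => i _ do rewrite mxE.
  move=> H; apply/eqP; rewrite -(eqr_int rat) rmorph_sum rmorph0 /=.
  apply/eqP; apply: (etrans _ H); apply: eq_bigr => i _.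
  by rewrite rmorphM.
have Hpm : (\sum_(i < r.+1) beta i * lam_plus lam i)%N = (\sum_(i < r.+1) beta i * lam_minus lam i)%N.
  apply/eqP; rewrite -eqz_nat !Posz_sum -subr_eq0 -sumrB; apply/eqP.
  apply: (etrans _ Hlb); apply: eq_bigr => i _.
  by rewrite !PoszM -mulrBr lam_pm mulrC.
have Ht : forall j l, evalb beta (S_E E j) * evalb beta (S_E E' l) =
                      evalb beta (S_E E' j) * evalb beta (S_E E l).
  move=> j l; apply/eqP; rewrite -subr_eq0 !evalb_EV -!rmorphM -rmorphB.
  have [q Hq] := P1 j l; rewrite /t_EE in Hq.
  by rewrite Hq rmorphM rmorphB !EV_Xmon Hpm subrr mulr0.
pose s j := toQx (evalb beta (S_E E j)).
pose s' j := toQx (evalb beta (S_E E' j)).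
have Hs : forall j l, s j * s' l = s' j * s l.
  by move=> j l; rewrite /s /s' -!toQxM Ht.
have [/existsP [j0 Hj0]|Hn] := boolP [exists j, s j != 0].
  exists (s' j0), (- s j0); split; first by right; rewrite oppr_eq0.
  move=> j; rewrite -/(s j) -/(s' j) mulNr (Hs j0 j) mulrC.
  by rewrite subrr.
exists 1, 0; split; first by left; rewrite oner_eq0.
move=> j; rewrite mul0r addr0 mul1r.
by move/existsPn: Hn => /(_ j); rewrite negbK => /eqP.
Qed.
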